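(* Let $p_1,p_2,q_1,q_2\in\mathbb C\setminus\{0\}$, and suppose the multiplicative subgroup of $\mathbb C^*$ generated by $p_1$ and $p_2$ is dense in $\mathbb C$. If $f\colon\mathbb C\to\mathbb C$ is a homeomorphism with $f(p_rw)=q_rf(w)$ for all $w\in\mathbb C$, $r=1,2$, then there exist $\gamma\in\mathbb C$ and $\alpha\in\mathbb C$ with $\operatorname{Re}\alpha>-1$ such that either $f(w)=\gamma w|w|^{\alpha}$ for all $w\in\mathbb C$, or $f(w)=\gamma\overline{w}|w|^{\alpha}$ for all $w\in\mathbb C$ (with $f(0)=0$).
   Context: For $w\neq0$ and complex $\alpha$, $|w|^\alpha=e^{\alpha\ln|w|}$. *)

(* Defs.v *)
From Stdlib Require Import Reals ZArith.
Open Scope R_scope.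

Definition Cplx : Type := (R * R)%type.

Definition Cre (z : Cplx) : R := fst z.
Definition Cim (z : Cplx) : R := snd z.
Definition C0 : Cplx := (0, 0).
Definition C1 : Cplx := (1, 0).
Definition Cadd (z w : Cplx) : Cplx := (fst z + fst w, snd z + snd w).
Definition Csub (z w : Cplx) : Cplx := (fst z - fst w, snd z - snd w).
Definition Cmul (z w : Cplx) : Cplx :=
  (fst z * fst w - snd z * snd w, fst z * snd w + snd z * fst w).
Definition Cconj (z : Cplx) : Cplx := (fst z, - snd z).
Definition Cabs (z : Cplx) : R := sqrt (fst z * fst z + snd z * snd z).
Definition Cinv (z : Cplx) : Cplx :=
  let d := fst z * fst z + snd z * snd z in (fst z / d, - snd z / d).

Definition Cexp (z : Cplx) : Cplx := (exp (fst z) * cos (snd z), exp (fst z) * sin (snd z)).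

(* |w|^alpha := e^(alpha ln|w|) for w <> 0 and complex alpha *)
Definition Cabs_pow (w alpha : Cplx) : Cplx :=
  Cexp (fst alpha * ln (Cabs w), snd alpha * ln (Cabs w)).

Fixpoint Cpow (z : Cplx) (n : nat) : Cplx :=
  match n with O => C1 | S k => Cmul z (Cpow z k) end.
Definition Cpowz (z : Cplx) (k : Z) : Cplx :=
  match k with
  | Z0 => C1
  | Zpos p => Cpow z (Pos.to_nat p)
  | Zneg p => Cinv (Cpow z (Pos.to_nat p))
  end.

Definition Ccontinuous (f : Cplx -> Cplx) : Prop :=
  forall z eps, 0 < eps -> exists delta, 0 < delta /\
    forall w, Cabs (Csub w z) < delta -> Cabs (Csub (f w) (f z)) < eps.

Definition Chomeomorphism (f : Cplx -> Cplx) : Prop :=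
  exists g : Cplx -> Cplx,
    (forall w, g (f w) = w) /\ (forall w, f (g w) = w) /\
    Ccontinuous f /\ Ccontinuous g.

(* the multiplicative subgroup of C^* generated by p1, p2 (abelian, so it is
   { p1^m p2^n : m n in Z }) is dense in C *)
Definition subgroup2_dense (p1 p2 : Cplx) : Prop :=
  forall z eps, 0 < eps -> exists m n : Z,
    Cabs (Csub (Cmul (Cpowz p1 m) (Cpowz p2 n)) z) < eps.

(* Main.v *)
Require Import Defs.
From Stdlib Require Import Reals ZArith Lra Lia Psatz.
Open Scope R_scope.
Notation C1 := Defs.C1.


Definition nsq (z : Cplx) : R := fst z * fst z + snd z * snd z.

Lemma nsq_ge0 z : 0 <= nsq z.
Proof. destruct z as [a b]; unfold nsq; simpl; nra. Qed.

Lemma nsq_pos z : z <> C0 -> 0 < nsq z.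
Proof.
  destruct z as [a b]; unfold nsq, C0; simpl; intro H.
  destruct (Req_dec a 0); destruct (Req_dec b 0); subst; try (exfalso; apply H; reflexivity); nra.
Qed.

Lemma Cabs_ge0 z : 0 <= Cabs z.
Proof. apply sqrt_pos. Qed.

Lemma Cabs_pos z : z <> C0 -> 0 < Cabs z.
Proof. intro H; apply sqrt_lt_R0; apply nsq_pos; auto. Qed.

Lemma Cabs_eq0 z : Cabs z = 0 -> z = C0.
Proof.
  intro H. destruct (Req_dec (nsq z) 0) as [E|E].
  - destruct z as [a b]; unfold nsq in E; simpl in E; destruct (Rplus_sqr_eq_0 a b E); subst; reflexivity.
  - exfalso. pose proof (nsq_ge0 z). assert (0 < Cabs z) by (apply sqrt_lt_R0; unfold nsq in *; lra). lra.
Qed.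

Lemma Cabs_sq z : Cabs z * Cabs z = nsq z.
Proof. apply sqrt_sqrt, nsq_ge0. Qed.

Lemma Cmul_comm a b : Cmul a b = Cmul b a.
Proof. destruct a, b; unfold Cmul; simpl; f_equal; ring. Qed.
Lemma Cmul_assoc a b c : Cmul a (Cmul b c) = Cmul (Cmul a b) c.
Proof. destruct a, b, c; unfold Cmul; simpl; f_equal; ring. Qed.
Lemma Cmul_1_l a : Cmul C1 a = a.
Proof. destruct a; unfold Cmul, C1; simpl; f_equal; ring. Qed.
Lemma Cmul_1_r a : Cmul a C1 = a.
Proof. destruct a; unfold Cmul, C1; simpl; f_equal; ring. Qed.
Lemma Cmul_0_r a : Cmul a C0 = C0.
Proof. destruct a; unfold Cmul, C0; simpl; f_equal; ring. Qed.

Lemma nsq_mul a b : nsq (Cmul a b) = nsq a * nsq b.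
Proof. destruct a, b; unfold nsq, Cmul; simpl; ring. Qed.

Lemma Cabs_mul a b : Cabs (Cmul a b) = Cabs a * Cabs b.
Proof. unfold Cabs. fold (nsq (Cmul a b)) (nsq a) (nsq b). rewrite nsq_mul. apply sqrt_mult; apply nsq_ge0. Qed.

Lemma Cmul_inv z : z <> C0 -> Cmul z (Cinv z) = C1.
Proof.
  intro H. pose proof (nsq_pos z H). destruct z as [a b]; unfold nsq in *; simpl in *.
  unfold Cmul, Cinv, C1; simpl; f_equal; field; lra.
Qed.

Lemma Cmul_nz a b : a <> C0 -> b <> C0 -> Cmul a b <> C0.
Proof.
  intros Ha Hb E. pose proof (nsq_pos a Ha). pose proof (nsq_pos b Hb).
  assert (nsq (Cmul a b) = 0) by (rewrite E; unfold nsq, C0; simpl; ring).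
  rewrite nsq_mul in H1. nra.
Qed.

Lemma Cinv_nz z : z <> C0 -> Cinv z <> C0.
Proof. intros H E. pose proof (Cmul_inv z H). rewrite E, Cmul_0_r in H0. unfold C0, C1 in H0. injection H0; lra. Qed.

Lemma Cabs_triangle a b : Cabs (Cadd a b) <= Cabs a + Cabs b.
Proof.
  pose proof (Cabs_ge0 a); pose proof (Cabs_ge0 b); pose proof (Cabs_ge0 (Cadd a b)).
  apply Rsqr_incr_0_var; [|lra]. unfold Rsqr.
  rewrite Cabs_sq. replace ((Cabs a + Cabs b) * (Cabs a + Cabs b)) with
    (Cabs a * Cabs a + Cabs b * Cabs b + 2 * (Cabs a * Cabs b)) by ring.
  rewrite !Cabs_sq. unfold Cabs. rewrite <- sqrt_mult by apply nsq_ge0.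
  destruct a as [x1 y1], b as [x2 y2]; unfold nsq, Cadd; simpl.
  assert (x1*x2 + y1*y2 <= sqrt ((x1*x1+y1*y1)*(x2*x2+y2*y2))).
  { destruct (Rle_dec (x1*x2+y1*y2) 0). apply Rle_trans with 0; [lra| apply sqrt_pos].
    apply Rsqr_incr_0_var; [|apply sqrt_pos]. rewrite Rsqr_sqrt. unfold Rsqr. pose proof (Rle_0_sqr (x1*y2-x2*y1)); unfold Rsqr in *; nra. apply Rmult_le_pos; nra. }
  nra.
Qed.

Lemma Cabs_sub_sym a b : Cabs (Csub a b) = Cabs (Csub b a).
Proof. destruct a, b; unfold Cabs, Csub; simpl; f_equal; ring. Qed.

Lemma Cabs_sub_tri a b c : Cabs (Csub a c) <= Cabs (Csub a b) + Cabs (Csub b c).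
Proof.
  replace (Csub a c) with (Cadd (Csub a b) (Csub b c)) by (destruct a,b,c; unfold Cadd, Csub; simpl; f_equal; ring).
  apply Cabs_triangle.
Qed.

Lemma Cabs_comp (a : Cplx) : Rabs (fst a) + Rabs (snd a) >= Cabs a /\ Rabs (fst a) <= Cabs a /\ Rabs (snd a) <= Cabs a.
Proof.
  destruct a as [x y]; unfold Cabs; simpl. pose proof (sqrt_pos (x*x+y*y)).
  pose proof (sqrt_sqrt (x*x+y*y)). assert (0 <= x*x+y*y) by nra.
  pose proof (Rabs_pos x); pose proof (Rabs_pos y).
  assert (Rabs x * Rabs x = x * x) by (rewrite <- Rabs_mult; apply Rabs_right; nra).
  assert (Rabs y * Rabs y = y * y) by (rewrite <- Rabs_mult; apply Rabs_right; nra).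
  specialize (H0 H1). repeat split; nra.
Qed.

Lemma Cexp_add a b : Cexp (Cadd a b) = Cmul (Cexp a) (Cexp b).
Proof. destruct a, b; unfold Cexp, Cadd, Cmul; simpl. rewrite exp_plus, cos_plus, sin_plus. f_equal; ring. Qed.

Lemma Cabs_Cexp z : Cabs (Cexp z) = exp (fst z).
Proof.
  destruct z as [a b]; unfold Cabs, Cexp; simpl.
  replace (exp a * cos b * (exp a * cos b) + exp a * sin b * (exp a * sin b)) with (Rsqr (exp a))
    by (unfold Rsqr; pose proof (sin2_cos2 b); unfold Rsqr in H; nra).
  apply sqrt_Rsqr. left; apply exp_pos.
Qed.

Lemma Cexp_nz z : Cexp z <> C0.
Proof. intro E. pose proof (Cabs_Cexp z). rewrite E in H. unfold Cabs, C0 in H; simpl in H.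
  replace (0*0+0*0) with 0 in H by ring. rewrite sqrt_0 in H. pose proof (exp_pos (fst z)). lra. Qed.

Lemma Cexp_0 : Cexp C0 = C1.
Proof. unfold Cexp, C0, C1; simpl. rewrite exp_0, cos_0, sin_0. f_equal; ring. Qed.

Lemma small_eq0 (d : R) : (forall e, 0 < e -> Rabs d < e) -> d = 0.
Proof.
  intro H. destruct (Req_dec d 0) as [|Hd]; auto.
  specialize (H (Rabs d) (Rabs_pos_lt _ Hd)). lra.
Qed.

Lemma Rabs_le_between a b : Rabs a <= b -> -b <= a <= b.
Proof. unfold Rabs; destruct (Rcase_abs a); lra. Qed.

Section LC.
Variable L : R -> R.
Variable h : R.
Hypothesis hpos : 0 < h.
Hypothesis Ladd : forall s t, Rabs s <= h -> Rabs t <= h -> Rabs (s+t) <= h -> L (s+t) = L s + L t.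
Hypothesis Lcont : forall e, 0 < e -> exists d, 0 < d /\ forall x, Rabs x < d -> Rabs (L x) < e.

Lemma L0 : L 0 = 0.
Proof.
  assert (Rabs 0 <= h) by (rewrite Rabs_R0; lra).
  pose proof (Ladd 0 0 H H). rewrite Rplus_0_r in H0. specialize (H0 H). lra.
Qed.

Lemma Lneg y : Rabs y <= h -> L (- y) = - L y.
Proof.
  intro Hy. assert (Rabs 0 <= h) by (rewrite Rabs_R0; lra).
  pose proof (Ladd y (-y) Hy). rewrite Rabs_Ropp in H0. specialize (H0 Hy).
  replace (y + - y) with 0 in H0 by ring. rewrite L0 in H0. specialize (H0 H). lra.
Qed.

Lemma Lnat (k : nat) y : INR k * Rabs y <= h -> L (INR k * y) = INR k * L y.
Proof.
  induction k as [|k IH]; intro Hk.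
  - simpl. rewrite !Rmult_0_l. apply L0.
  - rewrite S_INR in *. pose proof (pos_INR k). pose proof (Rabs_pos y).
    replace ((INR k + 1) * y) with (INR k * y + y) by ring.
    rewrite Ladd. rewrite IH. ring. nra.
    rewrite Rabs_mult, Rabs_right by lra; nra. nra.
    replace (INR k * y + y) with ((INR k + 1) * y) by ring.
    rewrite Rabs_mult, Rabs_right by lra; nra.
Qed.

Lemma Lint (n : nat) (m : Z) y : 0 < y -> INR n * y <= h -> Rabs (IZR m) <= INR n ->
  L (IZR m * y) = IZR m * L y.
Proof.
  intros Hy Hn Hm. destruct (Z_le_gt_dec 0 m) as [Hm0|Hm0].
  - destruct (Z_of_nat_complete m Hm0) as [k ->]. rewrite <- INR_IZR_INZ in *.
    apply Lnat. rewrite Rabs_right by lra. rewrite Rabs_right in Hm by (apply Rle_ge, pos_INR). nra.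
  - assert (m = - Z.of_nat (Z.to_nat (- m)))%Z by lia.
    set (k := Z.to_nat (-m)) in *. rewrite H in *. rewrite opp_IZR, <- INR_IZR_INZ in *.
    rewrite Rabs_Ropp, Rabs_right in Hm by (apply Rle_ge, pos_INR).
    replace (- INR k * y) with (- (INR k * y)) by ring. rewrite Lneg, Lnat. ring.
    rewrite Rabs_right by lra; nra.
    rewrite Rabs_mult, Rabs_right by (apply Rle_ge, pos_INR). rewrite (Rabs_right y) by lra. nra.
Qed.

Lemma local_cauchy x : Rabs x <= h -> L x = (L h / h) * x.
Proof.
  intro Hx. set (c := L h / h).
  assert (D : Rminus (L x) (c * x) = 0); [|lra].
  apply small_eq0. intros e He.
  destruct (Lcont (e/2)) as [d [Hd Hd2]]; [lra|].
  set (K := h / d + 2 * Rabs c * h / e + 1).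
  assert (HK : 0 < K). { unfold K. assert (0 <= h/d) by (apply Rlt_le, Rdiv_lt_0_compat; lra).
    assert (0 <= 2 * Rabs c * h / e). { unfold Rdiv. apply Rmult_le_pos. pose proof (Rabs_pos c). nra. left; apply Rinv_0_lt_compat; lra. } lra. }
  destruct (archimed K) as [Hup _].
  set (n := Z.to_nat (up K)).
  assert (Hn : INR n = IZR (up K)). { unfold n. rewrite INR_IZR_INZ. f_equal. apply Z2Nat.id. apply le_IZR. lra. }
  assert (HnK : K < INR n) by lra.
  assert (Hnpos : 0 < INR n) by lra.
  set (y := h / INR n).
  assert (Hy : 0 < y) by (unfold y; apply Rdiv_lt_0_compat; lra).
  assert (Hny : INR n * y = h) by (unfold y; field; lra).
  assert (Hyd : y < d). { unfold y. apply Rmult_lt_reg_r with (INR n); [lra|]. unfold Rdiv. rewrite Rmult_assoc, Rinv_l by lra.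
    assert (h / d < INR n) by (unfold K in HK, HnK; assert (0 <= 2 * Rabs c * h / e) by (unfold Rdiv; apply Rmult_le_pos; [pose proof (Rabs_pos c); nra | left; apply Rinv_0_lt_compat; lra]); lra).
    apply Rmult_lt_reg_r with (/ d). apply Rinv_0_lt_compat; lra.
    replace (h * 1 * / d) with (h / d) by (unfold Rdiv; ring). replace (d * INR n * / d) with (INR n) by (field; lra). lra. }
  assert (Hcy : Rabs c * y < e / 2). { unfold y.
    assert (2 * Rabs c * h / e < INR n) by (unfold K in HnK; assert (0 <= h/d) by (apply Rlt_le, Rdiv_lt_0_compat; lra); lra).
    assert (2 * Rabs c * h < INR n * e). { apply Rmult_lt_reg_r with (/ e). apply Rinv_0_lt_compat; lra.
      replace (INR n * e * / e) with (INR n) by (field; lra). exact H. }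
    apply Rmult_lt_reg_r with (2 * INR n). lra. replace (Rabs c * (h / INR n) * (2 * INR n)) with (2 * Rabs c * h) by (field; lra). nra. }
  set (r := x / y).
  destruct (archimed r) as [Hr1 Hr2].
  set (m := (up r - 1)%Z).
  assert (Hm1 : IZR m <= r) by (unfold m; rewrite minus_IZR; simpl; lra).
  assert (Hm2 : r - 1 < IZR m) by (unfold m; rewrite minus_IZR; simpl; lra).
  assert (Hrn : Rabs r <= INR n). { unfold r. unfold Rdiv. rewrite Rabs_mult, Rabs_inv. rewrite (Rabs_right y) by lra.
    apply Rmult_le_reg_r with y; [lra|]. unfold Rdiv. rewrite Rmult_assoc, Rinv_l by lra. lra. }
  assert (Hmn : Rabs (IZR m) <= INR n). {
    apply Rabs_le. split; [|apply Rabs_le_between in Hrn; lra].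
    apply Rabs_le_between in Hrn.
    assert (IZR (- Z.of_nat n - 1) < IZR m) by (rewrite minus_IZR, opp_IZR, <- INR_IZR_INZ; simpl; lra).
    apply lt_IZR in H. assert (Hz : (- Z.of_nat n <= m)%Z) by lia. apply IZR_le in Hz.
    rewrite opp_IZR, <- INR_IZR_INZ in Hz. lra. }
  set (q := IZR m * y).
  assert (Hxq1 : 0 <= x - q). { unfold q. assert (x = r * y) by (unfold r; field; lra). nra. }
  assert (Hxq2 : x - q < y). { unfold q. assert (x = r * y) by (unfold r; field; lra). nra. }
  assert (Hyh : y <= h) by (assert (1 < INR n) by (unfold K in HnK; assert (0 <= h/d) by (apply Rlt_le, Rdiv_lt_0_compat; lra);
     assert (0 <= 2 * Rabs c * h / e) by (unfold Rdiv; apply Rmult_le_pos; [pose proof (Rabs_pos c); nra | left; apply Rinv_0_lt_compat; lra]); lra); nra).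
  assert (Hq : Rabs q <= h). { unfold q. rewrite Rabs_mult, (Rabs_right y) by lra. nra. }
  assert (Hxq : Rabs (x - q) <= h) by (rewrite Rabs_right; lra).
  assert (HLx : L x = L q + L (x - q)). { replace x with (q + (x - q)) at 1 by ring. apply Ladd; auto.
    replace (q + (x - q)) with x by ring; auto. }
  assert (HLq : L q = c * q). {
    unfold q. rewrite (Lint n m y) by (auto; lra).
    assert (L h = INR n * L y). { rewrite <- Hny. apply Lnat. rewrite Rabs_right by lra. lra. }
    unfold c. rewrite H. rewrite <- Hny. field. lra. }
  assert (HL : Rabs (L (x - q)) < e / 2) by (apply Hd2; rewrite Rabs_right; lra).
  replace (L x - c * x) with (L (x - q) - c * (x - q)) by (rewrite HLx, HLq; ring).
  eapply Rle_lt_trans. apply Rabs_triang. rewrite Rabs_Ropp, Rabs_mult, (Rabs_right (x - q)) by lra.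
  assert (Rabs c * (x - q) <= Rabs c * y) by (apply Rmult_le_compat_l; [apply Rabs_pos | lra]).
  lra.
Qed.
End LC.

Lemma cos1 x : cos x = 1 -> exists k : Z, x = 2 * IZR k * PI.
Proof.
  intro H. pose proof (cos_2a_sin (x/2)). replace (2 * (x/2)) with x in H0 by field.
  assert (sin (x/2) = 0) by nra. destruct (sin_eq_0_0 _ H1) as [k Hk].
  exists k. lra.
Qed.

Lemma angle_eq a b : cos a = cos b -> sin a = sin b -> Rabs (a - b) < 2 * PI -> a = b.
Proof.
  intros Hc Hs Hab. assert (cos (a - b) = 1).
  { rewrite cos_minus, Hc, Hs. pose proof (sin2_cos2 b). unfold Rsqr in H. lra. }
  destruct (cos1 _ H) as [k Hk]. rewrite Hk in Hab.
  pose proof PI_RGT_0.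
  rewrite Rabs_mult, (Rabs_right PI) in Hab by lra. rewrite Rabs_mult, Rabs_right in Hab by lra.
  assert (Rabs (IZR k) < 1) by nra. apply Rabs_def2 in H1. destruct H1.
  change (-(1)) with (IZR (-1)) in H2. apply lt_IZR in H1. apply lt_IZR in H2. assert (k = 0%Z) by lia. subst. simpl in Hk. lra.
Qed.

Lemma polar_local z : 0 < fst z -> z = Cexp (ln (Cabs z), atan (snd z / fst z)).
Proof.
  destruct z as [x y]; simpl; intro Hx.
  assert (Hz : (x, y) <> C0) by (unfold C0; intro E; injection E; lra).
  pose proof (Cabs_pos _ Hz) as Hr. set (r := Cabs (x,y)) in *.
  assert (Hr2 : r * r = x * x + y * y) by (unfold r; rewrite Cabs_sq; reflexivity).
  assert (Hs : sqrt (1 + (y/x)²) = r / x).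
  { replace (1 + (y/x)²) with (Rsqr (r/x)). apply sqrt_Rsqr. left; apply Rdiv_lt_0_compat; lra.
    unfold Rsqr, Rdiv. replace (r * /x * (r * /x)) with (r*r * /(x*x)) by (field; lra). rewrite Hr2. field. lra. }
  unfold Cexp; simpl. rewrite exp_ln by lra. rewrite cos_atan, sin_atan, Hs.
  f_equal; field; lra.
Qed.

Lemma Cabs_C1 : Cabs C1 = 1.
Proof. unfold Cabs, C1; simpl. replace (1*1+0*0) with 1 by ring. apply sqrt_1. Qed.

Lemma near1 z e : Cabs (Csub z C1) < e -> Rabs (fst z - 1) < e /\ Rabs (snd z) < e /\ Rabs (Cabs z - 1) < e.
Proof.
  intro H. pose proof (Cabs_comp (Csub z C1)) as [_ [H1 H2]].
  destruct z as [x y]. cbn [fst snd] in *.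
  change (fst (Csub (x, y) C1)) with (x - 1) in H1. change (snd (Csub (x, y) C1)) with (y - 0) in H2. replace (y - 0) with y in H2 by ring.
  split; [lra|split;[lra|]].
  pose proof (Cabs_sub_tri (x,y) C1 C0). pose proof (Cabs_sub_tri C1 (x,y) C0).
  replace (Csub (x,y) C0) with (x,y) in * by (unfold Csub, C0; simpl; f_equal; ring).
  replace (Csub C1 C0) with C1 in * by (unfold Csub, C0, C1; simpl; f_equal; ring).
  rewrite Cabs_C1 in *. rewrite (Cabs_sub_sym C1) in H3.
  apply Rabs_def1; lra.
Qed.

Lemma ln_small e : 0 < e -> exists eta, 0 < eta /\ forall r, Rabs (r - 1) < eta -> Rabs (ln r) < e.
Proof.
  intro He. pose proof (exp_increasing (-e) 0 ltac:(lra)). pose proof (exp_increasing 0 e He).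
  rewrite exp_0 in *. exists (Rmin (1 - exp (-e)) (exp e - 1)). split.
  apply Rmin_glb_lt; lra.
  intros r Hr. apply Rabs_def2 in Hr. destruct Hr.
  pose proof (Rmin_l (1 - exp (-e)) (exp e - 1)). pose proof (Rmin_r (1 - exp (-e)) (exp e - 1)).
  pose proof (exp_pos (-e)).
  assert (ln r < e) by (rewrite <- (ln_exp e); apply ln_increasing; lra).
  assert (-e < ln r) by (rewrite <- (ln_exp (-e)); apply ln_increasing; lra).
  apply Rabs_def1; lra.
Qed.

Lemma atan_small e : 0 < e -> exists eta, 0 < eta /\ forall v, Rabs v < eta -> Rabs (atan v) < e.
Proof.
  intro He. pose proof PI2_3_2. set (e' := Rmin e 1).
  assert (0 < e') by (apply Rmin_glb_lt; lra). assert (e' <= e) by apply Rmin_l. assert (e' <= 1) by apply Rmin_r.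
  exists (tan e'). split. apply tan_gt_0; lra.
  intros v Hv. apply Rabs_def2 in Hv. destruct Hv.
  pose proof (atan_increasing _ _ H3). pose proof (atan_increasing _ _ H4).
  rewrite atan_opp, atan_tan in * by lra. apply Rabs_def1; lra.
Qed.

Lemma div_small a b eta : 1/2 < b -> Rabs a < eta/2 -> Rabs (a/b) < eta.
Proof.
  intros Hb Ha. unfold Rdiv. rewrite Rabs_mult, Rabs_inv, (Rabs_right b) by lra.
  apply Rmult_lt_reg_r with b; [lra|]. rewrite Rmult_assoc, Rinv_l by lra. pose proof (Rabs_pos a). nra.
Qed.

Lemma Cexp_inj_parts m a b : Cexp (m, a) = Cexp (m, b) -> cos a = cos b /\ sin a = sin b.
Proof.
  unfold Cexp; simpl. intro E. injection E. intros E2 E1. pose proof (exp_pos m).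
  split; apply Rmult_eq_reg_l with (exp m); lra.
Qed.

Lemma hom_R_C (psi : R -> Cplx) :
  (forall s t, psi (s + t) = Cmul (psi s) (psi t)) ->
  (forall e, 0 < e -> exists d, 0 < d /\ forall s, Rabs s < d -> Cabs (Csub (psi s) C1) < e) ->
  exists b1 b2, forall s, psi s = Cexp (b1 * s, b2 * s).
Proof.
  intros Hmul Hc.
  destruct (Hc (1/2)) as [d0 [Hd0 Hd0']]; [lra|].
  assert (Hpos : forall s, Rabs s < d0 -> 1/2 < fst (psi s)).
  { intros s Hs. destruct (near1 _ _ (Hd0' s Hs)) as [H1 _]. apply Rabs_def2 in H1. lra. }
  assert (Hnz : forall s, Rabs s < d0 -> psi s <> C0).
  { intros s Hs E. pose proof (Hpos s Hs). rewrite E in H. unfold C0 in H; simpl in H. lra. }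
  set (M := fun s => ln (Cabs (psi s))).
  set (Aa := fun s => atan (snd (psi s) / fst (psi s))).
  assert (Hpol : forall s, Rabs s < d0 -> psi s = Cexp (M s, Aa s)).
  { intros s Hs. apply polar_local. pose proof (Hpos s Hs). lra. }
  set (h := d0 / 2).
  assert (Hh : 0 < h) by (unfold h; lra).
  assert (Hhd : forall s, Rabs s <= h -> Rabs s < d0) by (intros; unfold h in *; lra).
  assert (Madd : forall s t, Rabs s <= h -> Rabs t <= h -> Rabs (s+t) <= h -> M (s+t) = M s + M t).
  { intros s t Hs Ht Hst. unfold M. rewrite Hmul, Cabs_mul. apply ln_mult; apply Cabs_pos, Hnz; auto. }
  assert (Aadd : forall s t, Rabs s <= h -> Rabs t <= h -> Rabs (s+t) <= h -> Aa (s+t) = Aa s + Aa t).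
  { intros s t Hs Ht Hst.
    assert (E : Cexp (M (s+t), Aa (s+t)) = Cexp (M (s+t), Aa s + Aa t)).
    { rewrite <- Hpol by auto. rewrite (Madd s t) by auto.
      change (M s + M t, Aa s + Aa t) with (Cadd (M s, Aa s) (M t, Aa t)).
      rewrite Cexp_add, <- !Hpol by auto. apply Hmul. }
    apply Cexp_inj_parts in E. destruct E as [Ec Es]. apply angle_eq; auto.
    pose proof (atan_bound (snd (psi (s+t)) / fst (psi (s+t)))).
    pose proof (atan_bound (snd (psi s) / fst (psi s))).
    pose proof (atan_bound (snd (psi t) / fst (psi t))). pose proof PI_RGT_0.
    unfold Aa. apply Rabs_def1; lra. }
  assert (Mc : forall e, 0 < e -> exists d, 0 < d /\ forall x, Rabs x < d -> Rabs (M x) < e).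
  { intros e He. destruct (ln_small e He) as [eta [Heta Heta']].
    destruct (Hc eta Heta) as [d [Hd Hd']]. exists (Rmin d d0). split. apply Rmin_glb_lt; lra.
    intros x Hx. pose proof (Rmin_l d d0). pose proof (Rmin_r d d0).
    apply Heta'. apply (near1 _ _ (Hd' x ltac:(lra))). }
  assert (Ac : forall e, 0 < e -> exists d, 0 < d /\ forall x, Rabs x < d -> Rabs (Aa x) < e).
  { intros e He. destruct (atan_small e He) as [eta [Heta Heta']].
    destruct (Hc (eta/2)) as [d [Hd Hd']]; [lra|]. exists (Rmin d d0). split. apply Rmin_glb_lt; lra.
    intros x Hx. pose proof (Rmin_l d d0). pose proof (Rmin_r d d0).
    apply Heta'. apply div_small. apply Hpos; lra. apply (near1 _ _ (Hd' x ltac:(lra))). }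
  set (b1 := M h / h). set (b2 := Aa h / h).
  exists b1, b2.
  assert (Hloc : forall y, Rabs y <= h -> psi y = Cexp (b1 * y, b2 * y)).
  { intros y Hy. rewrite Hpol by auto. unfold b1, b2.
    rewrite <- (local_cauchy M h Hh Madd Mc y Hy), <- (local_cauchy Aa h Hh Aadd Ac y Hy). reflexivity. }
  assert (Hpow : forall (N : nat) y, Rabs y <= h -> psi (INR N * y) = Cexp (b1 * (INR N * y), b2 * (INR N * y))).
  { intros N y Hy. induction N as [|N IH].
    - simpl. rewrite !Rmult_0_l, !Rmult_0_r. replace (Cexp (0,0)) with (Cexp (b1 * 0, b2 * 0)) by (f_equal; f_equal; ring).
      apply Hloc. rewrite Rabs_R0; lra.
    - rewrite S_INR. replace ((INR N + 1) * y) with (INR N * y + y) by ring.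
      rewrite Hmul, IH, Hloc by auto. rewrite <- Cexp_add. unfold Cadd; simpl. f_equal; f_equal; ring. }
  intro s.
  destruct (archimed (Rabs s / h)) as [Hup _].
  assert (0 <= Rabs s / h) by (apply Rmult_le_pos; [apply Rabs_pos| left; apply Rinv_0_lt_compat; lra]).
  set (N := S (Z.to_nat (up (Rabs s / h)))).
  assert (HN : Rabs s / h < INR N).
  { unfold N. rewrite S_INR, INR_IZR_INZ, Z2Nat.id. lra. apply le_IZR. lra. }
  assert (HN0 : 0 < INR N) by lra.
  replace s with (INR N * (s / INR N)) by (field; lra).
  apply Hpow. unfold Rdiv. rewrite Rabs_mult, Rabs_inv, (Rabs_right (INR N)) by lra.
  apply Rmult_le_reg_r with (INR N); [lra|]. rewrite Rmult_assoc, Rinv_l by lra.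
  assert (Rabs s < h * INR N). { apply Rmult_lt_reg_r with (/ h). apply Rinv_0_lt_compat; lra.
    replace (h * INR N * / h) with (INR N) by (field; lra). exact HN. }
  lra.
Qed.

Lemma cont_at0 (g : R -> R) : continuity_pt g 0 ->
  forall e, 0 < e -> exists d, 0 < d /\ forall x, Rabs x < d -> Rabs (g x - g 0) < e.
Proof.
  intros Hg e He. destruct (Hg e He) as [d [Hd Hd']]. exists d. split; auto.
  intros x Hx. destruct (Req_dec x 0) as [->|Hx0].
  - replace (g 0 - g 0) with 0 by ring. rewrite Rabs_R0; lra.
  - apply (Hd' x). split. split. exact I. auto. simpl. unfold R_dist. rewrite Rminus_0_r. exact Hx.
Qed.

Lemma cont_pair (g1 g2 : R -> R) : continuity_pt g1 0 -> continuity_pt g2 0 ->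
  forall e, 0 < e -> exists d, 0 < d /\ forall x, Rabs x < d ->
   Cabs (Csub (g1 x, g2 x) (g1 0, g2 0)) < e.
Proof.
  intros H1 H2 e He. destruct (cont_at0 g1 H1 (e/2)) as [d1 [Hd1 Hd1']]; [lra|].
  destruct (cont_at0 g2 H2 (e/2)) as [d2 [Hd2 Hd2']]; [lra|].
  exists (Rmin d1 d2). split. apply Rmin_glb_lt; lra.
  intros x Hx. pose proof (Rmin_l d1 d2). pose proof (Rmin_r d1 d2).
  pose proof (Cabs_comp (Csub (g1 x, g2 x) (g1 0, g2 0))) as [Hc _].
  specialize (Hd1' x ltac:(lra)). specialize (Hd2' x ltac:(lra)).
  unfold Csub at 1 2 in Hc. simpl in Hc. lra.
Qed.

Lemma Cexp_eq_sum a b c d : Cadd a b = Cadd c d -> Cmul (Cexp a) (Cexp b) = Cmul (Cexp c) (Cexp d).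
Proof. intro H. rewrite <- !Cexp_add, H. reflexivity. Qed.

Lemma polar w : w <> C0 -> exists t, w = Cexp (ln (Cabs w), t).
Proof.
  intro Hw. pose proof (Cabs_pos w Hw) as Hr. pose proof (Cabs_sq w) as Hr2.
  pose proof (Cabs_comp w) as [_ [Hx Hy]].
  destruct w as [x y]. set (r := Cabs (x,y)) in *. unfold nsq in Hr2; simpl in *.
  assert (Hb : -1 <= x / r <= 1).
  { apply Rabs_le_between. unfold Rdiv. rewrite Rabs_mult, Rabs_inv, (Rabs_right r) by lra.
    apply Rmult_le_reg_r with r; [lra|]. rewrite Rmult_assoc, Rinv_l by lra. lra. }
  assert (Hs : 1 - (x/r)² = (y/r)²).
  { assert (x/r*(x/r) + y/r*(y/r) = 1).
    { replace (x/r*(x/r) + y/r*(y/r)) with ((x*x+y*y)/(r*r)) by (field; lra). rewrite <- Hr2. field. lra. }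
    unfold Rsqr. lra. }
  unfold Cexp; simpl. rewrite exp_ln by lra.
  destruct (Rle_dec 0 y) as [Hy0|Hy0].
  - exists (acos (x / r)). assert (0 <= y / r) by (apply Rmult_le_pos; [lra| left; apply Rinv_0_lt_compat; lra]).
    rewrite cos_acos, sin_acos, Hs, sqrt_Rsqr by auto.
    f_equal; field; lra.
  - exists (- acos (x / r)). rewrite cos_neg, sin_neg, cos_acos, sin_acos, Hs, sqrt_Rsqr_abs by auto.
    unfold Rdiv. rewrite Rabs_mult, Rabs_inv, (Rabs_right r), (Rabs_left y) by lra.
    f_equal; field; lra.
Qed.

Lemma Cconj_Cexp L t : Cconj (Cexp (L, t)) = Cexp (L, - t).
Proof. unfold Cconj, Cexp; simpl. rewrite cos_neg, sin_neg. f_equal; ring. Qed.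

Lemma C0_neq_C1 : C0 <> C1.
Proof. unfold C0, C1. intro E. injection E. lra. Qed.

Lemma Cmul_inv_l z : z <> C0 -> Cmul (Cinv z) z = C1.
Proof. intro H. rewrite Cmul_comm. apply Cmul_inv; auto. Qed.

Lemma Cpow_nz a k : a <> C0 -> Cpow a k <> C0.
Proof. intro H. induction k; simpl. intro E; symmetry in E; apply C0_neq_C1; auto. apply Cmul_nz; auto. Qed.

Section Grp.
Variable f g : Cplx -> Cplx.
Hypothesis Hgf : forall w, g (f w) = w.
Definition Sg (a : Cplx) := exists l, forall w, f (Cmul a w) = Cmul l (f w).

Lemma S_one : Sg C1.
Proof. exists C1. intro w. rewrite !Cmul_1_l. reflexivity. Qed.

Lemma S_mul a b : Sg a -> Sg b -> Sg (Cmul a b).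
Proof.
  intros [la Ha] [lb Hb]. exists (Cmul la lb). intro w.
  rewrite <- Cmul_assoc, Ha, Hb, Cmul_assoc. reflexivity.
Qed.

Lemma S_inv a : Sg a -> a <> C0 -> Sg (Cinv a).
Proof.
  intros [l Ha] Ha0.
  assert (Hl : l <> C0).
  { intro E. subst l. pose proof (Ha C0) as E0. pose proof (Ha (Cinv a)) as E1.
    rewrite Cmul_0_r in E0. rewrite Cmul_inv in E1 by auto.
    rewrite (Cmul_comm C0), Cmul_0_r in E0, E1. rewrite <- E0 in E1.
    apply C0_neq_C1. rewrite <- (Hgf C0), <- (Hgf C1), E1. reflexivity. }
  exists (Cinv l). intro w.
  assert (E : f w = Cmul l (f (Cmul (Cinv a) w))).
  { rewrite <- Ha, Cmul_assoc, Cmul_inv, Cmul_1_l by auto. reflexivity. }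
  rewrite E, Cmul_assoc, Cmul_inv_l, Cmul_1_l by auto. reflexivity.
Qed.

Lemma S_pow a k : Sg a -> Sg (Cpow a k).
Proof. intro H. induction k; simpl. apply S_one. apply S_mul; auto. Qed.

Lemma S_powz a m : Sg a -> a <> C0 -> Sg (Cpowz a m).
Proof.
  intros H H0. destruct m; simpl. apply S_one. apply S_pow; auto.
  apply S_inv. apply S_pow; auto. apply Cpow_nz; auto.
Qed.
End Grp.

Lemma alg4 A B C G W Z : Cmul B C = Cmul G W ->
  Csub (Cmul A C) (Cmul Z W) = Cadd (Cmul (Csub A B) C) (Cmul (Csub G Z) W).
Proof.
  destruct A as [a1 a2], B as [b1 b2], C as [c1 c2], G as [g1 g2], W as [w1 w2], Z as [z1 z2].
  unfold Cmul, Csub, Cadd; simpl. intro E. injection E. intros E2 E1. f_equal; lra.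
Qed.

Lemma Csub_eq0 X Y : Csub X Y = C0 -> X = Y.
Proof. destruct X, Y; unfold Csub, C0; simpl. intro E; injection E; intros. f_equal; lra. Qed.

Lemma alg_comm3 l a b : Cmul (Cmul l a) b = Cmul (Cmul l b) a.
Proof. destruct l, a, b; unfold Cmul; simpl; f_equal; ring. Qed.

Lemma Cabs_Csub_mul a b w : Cabs (Csub (Cmul a w) (Cmul b w)) = Cabs (Csub a b) * Cabs w.
Proof. rewrite <- Cabs_mul. f_equal. destruct a, b, w; unfold Csub, Cmul; simpl; f_equal; ring. Qed.

Lemma Cabs0_eq z : Cabs z = 0 <-> z = C0.
Proof. split. apply Cabs_eq0. intros ->. unfold Cabs, C0; simpl. replace (0*0+0*0) with 0 by ring. apply sqrt_0. Qed.

Lemma fid (f : Cplx -> Cplx) (Hc : Ccontinuous f) p1 p2 (hdense : subgroup2_dense p1 p2)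
  (HS : forall m n, Sg f (Cmul (Cpowz p1 m) (Cpowz p2 n))) :
  forall z w, Cmul (f (Cmul z w)) (f C1) = Cmul (f z) (f w).
Proof.
  intros z w. apply Csub_eq0. apply Cabs_eq0. set (c := f C1).
  pose proof (Cabs_ge0 (Csub (Cmul (f (Cmul z w)) c) (Cmul (f z) (f w)))).
  destruct (Req_dec (Cabs (Csub (Cmul (f (Cmul z w)) c) (Cmul (f z) (f w)))) 0) as [E|E]; auto.
  exfalso. set (eps := Cabs (Csub (Cmul (f (Cmul z w)) c) (Cmul (f z) (f w)))) in *.
  set (K := Cabs c + Cabs (f w) + 1).
  assert (HK : 0 < K) by (unfold K; pose proof (Cabs_ge0 c); pose proof (Cabs_ge0 (f w)); lra).
  set (e' := eps / K).
  assert (He' : 0 < e') by (unfold e'; apply Rdiv_lt_0_compat; lra).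
  destruct (Hc (Cmul z w) e' He') as [d1 [Hd1 Hd1']].
  destruct (Hc z e' He') as [d2 [Hd2 Hd2']].
  set (d := Rmin d2 (d1 / (Cabs w + 1))).
  pose proof (Cabs_ge0 w).
  assert (Hd : 0 < d) by (apply Rmin_glb_lt; [lra| apply Rdiv_lt_0_compat; lra]).
  destruct (hdense z d Hd) as [m [n Hmn]].
  unfold d in Hmn. set (gg := Cmul (Cpowz p1 m) (Cpowz p2 n)) in *.
  destruct (HS m n) as [l Hl]. fold gg in Hl.
  assert (Hg1 : Cmul (f (Cmul gg w)) c = Cmul (f gg) (f w)).
  { rewrite Hl. rewrite <- (Cmul_1_r gg). rewrite Hl. apply alg_comm3. }
  pose proof (alg4 (f (Cmul z w)) (f (Cmul gg w)) c (f gg) (f w) (f z) Hg1) as Hdec.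
  assert (Hdm : Cabs (Csub gg z) < d2) by (pose proof (Rmin_l d2 (d1 / (Cabs w + 1))); lra).
  assert (Hdw : Cabs (Csub (Cmul gg w) (Cmul z w)) < d1).
  { rewrite Cabs_Csub_mul. pose proof (Rmin_r d2 (d1 / (Cabs w + 1))).
    assert (Cabs (Csub gg z) * (Cabs w + 1) < d1).
    { apply Rmult_lt_reg_r with (/ (Cabs w + 1)). apply Rinv_0_lt_compat; lra.
      replace (d1 * / (Cabs w + 1)) with (d1 / (Cabs w + 1)) by reflexivity.
      rewrite Rmult_assoc, Rinv_r by lra. lra. }
    pose proof (Cabs_ge0 (Csub gg z)). nra. }
  specialize (Hd1' _ Hdw). specialize (Hd2' _ Hdm).
  rewrite Cabs_sub_sym in Hd1'.
  assert (eps <= e' * Cabs c + e' * Cabs (f w)).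
  { unfold eps. rewrite Hdec. eapply Rle_trans. apply Cabs_triangle. rewrite !Cabs_mul.
    pose proof (Cabs_ge0 c); pose proof (Cabs_ge0 (f w)).
    apply Rplus_le_compat; apply Rmult_le_compat_r; lra. }
  assert (e' * K = eps) by (unfold e'; field; lra).
  unfold K in H2. pose proof (Cabs_ge0 c); pose proof (Cabs_ge0 (f w)). nra.
Qed.

Lemma Ceq_dec (a b : Cplx) : a = b \/ a <> b.
Proof.
  destruct a as [a1 a2], b as [b1 b2]. destruct (Req_dec a1 b1); destruct (Req_dec a2 b2); subst;
  [left; reflexivity | right; intro E; injection E; auto.. ].
Qed.

Lemma Cmul_0_l a : Cmul C0 a = C0.
Proof. rewrite Cmul_comm. apply Cmul_0_r. Qed.

Lemma Cmul_cancel_l a x y : a <> C0 -> Cmul a x = Cmul a y -> x = y.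
Proof.
  intros Ha E. rewrite <- (Cmul_1_l x), <- (Cmul_1_l y), <- (Cmul_inv_l a Ha), <- !Cmul_assoc, E. reflexivity.
Qed.

Lemma alg_F c x a b : c <> C0 -> Cmul x c = Cmul a b ->
  Cmul (Cinv c) x = Cmul (Cmul (Cinv c) a) (Cmul (Cinv c) b).
Proof.
  intros Hc E. assert (x = Cmul (Cmul a b) (Cinv c)).
  { rewrite <- E, <- Cmul_assoc, Cmul_inv, Cmul_1_r by auto. reflexivity. }
  rewrite H. pose proof (nsq_pos c Hc). destruct a, b, c; unfold nsq in *; simpl in *.
  unfold Cmul, Cinv; simpl. f_equal; field; lra.
Qed.

Lemma Csub_mul_l k a b : Csub (Cmul k a) (Cmul k b) = Cmul k (Csub a b).
Proof. destruct k, a, b; unfold Csub, Cmul; simpl; f_equal; ring. Qed.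

Lemma Cexp_eq_C1 a b : Cexp (a, b) = C1 -> a = 0 /\ cos b = 1.
Proof.
  intro E. assert (exp a = 1). { pose proof (Cabs_Cexp (a,b)). rewrite E, Cabs_C1 in H. simpl in H. lra. }
  assert (a = 0) by (apply exp_inv; rewrite exp_0; auto). subst.
  split; auto. unfold Cexp, C1 in E; simpl in E. injection E. intros. rewrite exp_0 in *. lra.
Qed.

Lemma Cexp_2PI : Cexp (0, 2 * PI) = C1.
Proof. unfold Cexp, C1; simpl. rewrite exp_0, cos_2PI, sin_2PI. f_equal; ring. Qed.

Theorem lemma3p1 (p1 p2 q1 q2 : Cplx) (f : Cplx -> Cplx)
  (hp1 : p1 <> C0) (hp2 : p2 <> C0) (hq1 : q1 <> C0) (hq2 : q2 <> C0)
  (hdense : subgroup2_dense p1 p2)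
  (hf : Chomeomorphism f)
  (h1 : forall w, f (Cmul p1 w) = Cmul q1 (f w))
  (h2 : forall w, f (Cmul p2 w) = Cmul q2 (f w)) :
  exists gamma alpha : Cplx,
    -1 < Cre alpha /\ f C0 = C0 /\
    ((forall w, w <> C0 -> f w = Cmul gamma (Cmul w (Cabs_pow w alpha))) \/
     (forall w, w <> C0 -> f w = Cmul gamma (Cmul (Cconj w) (Cabs_pow w alpha)))).
Proof.
  destruct hf as [g [Hgf [Hfg [Hcf Hcg]]]].
  assert (Finj0 : forall a b, f a = f b -> a = b) by (intros a b E; rewrite <- (Hgf a), <- (Hgf b), E; reflexivity).
  assert (HS : forall m n, Sg f (Cmul (Cpowz p1 m) (Cpowz p2 n))).
  { intros m n. apply S_mul; apply (S_powz f g Hgf); auto. exists q1; auto. exists q2; auto. }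
  pose proof (fid f Hcf p1 p2 hdense HS) as Hid.
  set (c := f C1) in *.
  assert (f0 : f C0 = C0).
  { destruct (Ceq_dec (f C0) C0) as [|H0]; auto. exfalso.
    pose proof (Hid C0 C0). rewrite Cmul_0_l in H.
    apply Cmul_cancel_l in H; auto. apply C0_neq_C1. apply Finj0. symmetry; exact H. }
  assert (Hc0 : c <> C0).
  { intro E. apply C0_neq_C1. apply Finj0. rewrite f0. symmetry. exact E. }
  set (F := fun w => Cmul (Cinv c) (f w)).
  assert (Fmul : forall z w, F (Cmul z w) = Cmul (F z) (F w)) by (intros; unfold F; apply alg_F; auto).
  assert (F1 : F C1 = C1) by (unfold F; apply Cmul_inv_l; auto).
  assert (F0 : F C0 = C0) by (unfold F; rewrite f0; apply Cmul_0_r).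
  assert (fF : forall w, f w = Cmul c (F w)) by (intro w; unfold F; rewrite Cmul_assoc, Cmul_inv, Cmul_1_l; auto).
  assert (Finj : forall a b, F a = F b -> a = b) by (intros a b E; apply Finj0; rewrite !fF, E; reflexivity).
  assert (Fc : Ccontinuous F).
  { intros z e He. pose proof (Cabs_ge0 (Cinv c)).
    destruct (Hcf z (e / (Cabs (Cinv c) + 1))) as [d [Hd Hd']]. apply Rdiv_lt_0_compat; lra.
    exists d. split; auto. intros w Hw. unfold F. rewrite Csub_mul_l, Cabs_mul.
    specialize (Hd' w Hw). pose proof (Cabs_ge0 (Csub (f w) (f z))).
    assert (Cabs (Csub (f w) (f z)) * (Cabs (Cinv c) + 1) < e).
    { apply Rmult_lt_reg_r with (/ (Cabs (Cinv c) + 1)). apply Rinv_0_lt_compat; lra.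
      rewrite Rmult_assoc, Rinv_r by lra. lra. }
    nra. }
  set (psi1 := fun s => F (Cexp (s, 0))).
  set (psi2 := fun t => F (Cexp (0, t))).
  assert (Hpsi1 : exists b1 b2, forall s, psi1 s = Cexp (b1 * s, b2 * s)).
  { apply hom_R_C.
    - intros s t. unfold psi1. rewrite <- Fmul, <- Cexp_add. unfold Cadd; simpl. do 3 f_equal. ring.
    - intros e He. destruct (Fc C1 e He) as [d [Hd Hd']].
      assert (Hct : continuity_pt (fun s => exp s * cos 0) 0).
      { change (fun s => exp s * cos 0) with (mult_fct exp (fun _ => cos 0)).
        apply continuity_pt_mult. apply derivable_continuous_pt, derivable_pt_exp.
        apply continuity_pt_const. intros x y; reflexivity. }
      assert (Hst : continuity_pt (fun s => exp s * sin 0) 0).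
      { change (fun s => exp s * sin 0) with (mult_fct exp (fun _ => sin 0)).
        apply continuity_pt_mult. apply derivable_continuous_pt, derivable_pt_exp.
        apply continuity_pt_const. intros x y; reflexivity. }
      destruct (cont_pair _ _ Hct Hst d Hd) as [d' [Hd1 Hd2]].
      exists d'. split; auto. intros s Hs. specialize (Hd2 s Hs).
      unfold psi1. rewrite <- F1. apply Hd'.
      replace C1 with (exp 0 * cos 0, exp 0 * sin 0) by (rewrite exp_0, cos_0, sin_0; unfold C1; f_equal; ring).
      exact Hd2. }
  assert (Hpsi2 : exists b1 b2, forall s, psi2 s = Cexp (b1 * s, b2 * s)).
  { apply hom_R_C.
    - intros s t. unfold psi2. rewrite <- Fmul, <- Cexp_add. unfold Cadd; simpl. do 3 f_equal. ring.
    - intros e He. destruct (Fc C1 e He) as [d [Hd Hd']].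
      assert (Hct : continuity_pt (fun s => exp 0 * cos s) 0).
      { change (fun s => exp 0 * cos s) with (mult_fct (fun _ => exp 0) cos).
        apply continuity_pt_mult. apply continuity_pt_const. intros x y; reflexivity. apply continuity_cos. }
      assert (Hst : continuity_pt (fun s => exp 0 * sin s) 0).
      { change (fun s => exp 0 * sin s) with (mult_fct (fun _ => exp 0) sin).
        apply continuity_pt_mult. apply continuity_pt_const. intros x y; reflexivity. apply continuity_sin. }
      destruct (cont_pair _ _ Hct Hst d Hd) as [d' [Hd1 Hd2]].
      exists d'. split; auto. intros s Hs. specialize (Hd2 s Hs).
      unfold psi2. rewrite <- F1. apply Hd'.
      replace C1 with (exp 0 * cos 0, exp 0 * sin 0) by (rewrite exp_0, cos_0, sin_0; unfold C1; f_equal; ring).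
      exact Hd2. }
  destruct Hpsi1 as [b1 [b2 Hb]]. destruct Hpsi2 as [c1 [c2 Hcc]].
  assert (Hc2pi : Cexp (c1 * (2 * PI), c2 * (2 * PI)) = C1).
  { rewrite <- Hcc. unfold psi2. rewrite Cexp_2PI. auto. }
  apply Cexp_eq_C1 in Hc2pi. destruct Hc2pi as [Hc1 Hcos].
  pose proof PI_RGT_0.
  assert (c1 = 0) by nra. subst c1.
  destruct (cos1 _ Hcos) as [k Hk].
  assert (c2 = IZR k) by nra. subst c2.
  assert (Hk1 : (k = 1 \/ k = -1)%Z).
  { destruct (Z.eq_dec k 0) as [->|Hk0].
    - exfalso. assert (E : F (Cexp (0, PI)) = F C1).
      { rewrite F1. change (psi2 PI = C1). rewrite Hcc.
        replace (0 * PI, IZR 0 * PI) with C0 by (unfold C0; simpl; f_equal; ring). apply Cexp_0. }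
      apply Finj, Cexp_eq_C1 in E. rewrite cos_PI in E. lra.
    - assert (Hc : (Z.abs k >= 2)%Z \/ k = 1%Z \/ k = (-1)%Z) by lia.
      destruct Hc as [Hk2|Hc]; auto. exfalso.
      assert (Hk0' : IZR k <> 0) by (apply not_0_IZR; auto).
      set (th := 2 * PI / IZR k).
      assert (E : F (Cexp (0, th)) = F C1).
      { rewrite F1. change (psi2 th = C1). rewrite Hcc.
        replace (0 * th, IZR k * th) with (0, 2 * PI) by (unfold th; f_equal; field; auto). apply Cexp_2PI. }
      apply Finj, Cexp_eq_C1 in E. destruct E as [_ E]. destruct (cos1 _ E) as [j Hj]. unfold th in Hj.
      assert (E' : 2 * PI = 2 * IZR j * PI * IZR k) by (rewrite <- Hj; field; auto).
      assert (E1 : 1 = IZR j * IZR k).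
      { apply Rmult_eq_reg_l with (2 * PI); [|lra]. rewrite Rmult_1_r. rewrite E' at 1. ring. }
      rewrite <- mult_IZR in E1. apply eq_IZR in E1. rewrite Z.mul_comm in E1. symmetry in E1. apply Z.eq_mul_1 in E1. lia. }
  assert (Hb1 : 0 < b1).
  { destruct (Rlt_le_dec 0 b1) as [|Hle]; auto. exfalso.
    destruct (Fc C0 1 ltac:(lra)) as [d [Hd Hd']].
    set (s := - Rabs (ln (d/2)) - 1).
    assert (Hs : exp s < d).
    { assert (s < ln (d/2)) by (unfold s; pose proof (Rle_abs (- ln (d/2))); rewrite Rabs_Ropp in H0; lra).
      apply exp_increasing in H0. rewrite exp_ln in H0 by lra. lra. }
    specialize (Hd' (Cexp (s,0))). rewrite F0 in Hd'.
    replace (Csub (Cexp (s,0)) C0) with (Cexp (s,0)) in Hd' by (unfold Cexp, Csub, C0; simpl; f_equal; ring).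
    rewrite Cabs_Cexp in Hd'. simpl fst in Hd'. specialize (Hd' Hs).
    change (F (Cexp (s,0))) with (psi1 s) in Hd'. rewrite Hb in Hd'.
    replace (Csub (Cexp (b1 * s, b2 * s)) C0) with (Cexp (b1 * s, b2 * s)) in Hd' by (unfold Cexp, Csub, C0; simpl; f_equal; ring).
    rewrite Cabs_Cexp in Hd'. simpl fst in Hd'.
    assert (s < 0) by (unfold s; pose proof (Rabs_pos (ln (d/2))); lra).
    assert (0 <= b1 * s) by nra.
    destruct (Req_dec (b1 * s) 0) as [E|E].
    - rewrite E, exp_0 in Hd'. lra.
    - pose proof (exp_increasing 0 (b1 * s) ltac:(lra)). rewrite exp_0 in H2. lra. }
  exists c, (b1 - 1, b2). split. unfold Cre; simpl; lra. split; auto.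
  destruct Hk1 as [-> | ->]; [left|right]; intros w Hw; destruct (polar w Hw) as [t Ht];
    rewrite fF; f_equal; unfold Cabs_pow; set (L := ln (Cabs w)) in *; clearbody L; simpl fst; simpl snd.
  - assert (Hw' : w = Cmul (Cexp (L, 0)) (Cexp (0, t))) by (rewrite Ht, <- Cexp_add; unfold Cadd; simpl; do 2 f_equal; ring).
    rewrite Hw' at 1. rewrite Fmul. change (F (Cexp (L,0))) with (psi1 L). change (F (Cexp (0,t))) with (psi2 t).
    rewrite Hb, Hcc, Ht. apply Cexp_eq_sum. unfold Cadd; simpl; f_equal; ring.
  - assert (Hw' : w = Cmul (Cexp (L, 0)) (Cexp (0, t))) by (rewrite Ht, <- Cexp_add; unfold Cadd; simpl; do 2 f_equal; ring).
    rewrite Hw' at 1. rewrite Fmul. change (F (Cexp (L,0))) with (psi1 L). change (F (Cexp (0,t))) with (psi2 t).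
    rewrite Hb, Hcc, Ht, Cconj_Cexp. apply Cexp_eq_sum. unfold Cadd; simpl; f_equal; ring.
Qed.
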